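(* Fix $\gamma\in(0,1]$ and $0<\alpha<0.25$, and let $\xi>0$ be an arbitrarily small number. Then for all sufficiently large $N$, $$\mathbb E\big[\|S-s^*\|^2\big]\le\frac{1}{N^{1-4\alpha-7\xi}}.$$
   Context: Model. Let $N\ge1$ be the number of servers, $\gamma\in(0,1]$ and $\alpha>0$ constants, and $\lambda=1-\gamma/N^{\alpha}$. Let $b=b(N)\ge1$ be an integer buffer size with $b=O(\log N)$. Each of the $N$ servers holds at most $b$ jobs; jobs arrive as a Poisson process of rate $\lambda N$, service times are i.i.d. exponential with rate $1$, and each arriving job samples two servers uniformly at random and joins the one with fewer jobs (ties broken uniformly). Let $S_i(t)$ be the fraction of servers with at least $i$ jobs; $S(t)=(S_1(t),\dots,S_b(t))$ is a continuous-time Markov chain on $\{s\in\{0,\frac1N,\dots,1\}^b:1\ge s_1\ge\cdots\ge s_b\ge0\}$ with, using $s_0=1$, $s_{b+1}=0$ and $e_k$ the $k$-th unit vector, transitions $s\to s+e_k/N$ at rate $\lambda N(s_{k-1}^2-s_k^2)$ and $s\to s-e_k/N$ at rate $N(s_k-s_{k+1})$. $S$ denotes a random vector with the stationary distribution of this chain. $s^*$ is the unique point of $\mathcal S=\{s\in\mathbb R^b:1\ge s_1\ge\cdots\ge s_b\ge0\}$ with $f(s^* )=0$, where $f_k(s)=\lambda(s_{k-1}^2-s_k^2)-(s_k-s_{k+1})$ (with $s_0=1,s_{b+1}=0$). $\|\cdot\|$ is the Euclidean norm. *)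

(* Defs.v *)
From HB Require Import structures.
From mathcomp Require Import all_boot all_order all_algebra.
From mathcomp Require Import all_classical all_reals all_analysis.
Set Implicit Arguments. Unset Strict Implicit. Unset Printing Implicit Defensive.
Import Order.TTheory GRing.Theory Num.Theory.
Local Open Scope ring_scope.

(* A microscopic state: for i : 'I_b, x i = number of servers with at least
   i+1 jobs (so S_{i+1} = x i / N).  Valid states are nonincreasing. *)
Definition state_ok (N b : nat) (x : {ffun 'I_b -> 'I_N.+1}) : bool :=
  [forall i : 'I_b, forall j : 'I_b, (i <= j)%N ==> (x j <= x i)%N].

Definition state (N b : nat) := {x : {ffun 'I_b -> 'I_N.+1} | state_ok x}.

(* s_k for k : nat, with s_0 = 1 and s_k = 0 for k > b. *)
Definition sfrac (R : realType) (N b : nat) (x : {ffun 'I_b -> 'I_N.+1}) (k : nat) : R :=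
  if k == 0%N then 1
  else nth 0 [seq ((x i : nat)%:R / N%:R : R) | i <- enum 'I_b] k.-1.

Definition lambdaN (R : realType) (gamma alpha : R) (N : nat) : R :=
  1 - gamma / (N%:R `^ alpha).

(* Transition rate from x to y (x <> y): s -> s + e_k/N at rate
   lam N (s_{k-1}^2 - s_k^2), s -> s - e_k/N at rate N (s_k - s_{k+1}),
   with k = i+1 for i : 'I_b. *)
Definition rate (R : realType) (N b : nat) (lam : R)
    (x y : {ffun 'I_b -> 'I_N.+1}) : R :=
  \sum_(i < b)
    ((if [forall j : 'I_b, (y j : nat) == (x j + (j == i))%N]
      then lam * N%:R * (sfrac R x i ^+ 2 - sfrac R x i.+1 ^+ 2) else 0)
   + (if [forall j : 'I_b, ((y j : nat) + (j == i))%N == x j]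
      then N%:R * (sfrac R x i.+1 - sfrac R x i.+2) else 0)).

Definition is_stationary (R : realType) (N b : nat) (lam : R)
    (pi : state N b -> R) : Prop :=
  (forall x, 0 <= pi x) /\ (\sum_x pi x = 1) /\
  (forall y : state N b,
     \sum_(x | x != y) pi x * rate lam (val x) (val y)
     = pi y * \sum_(z | z != y) rate lam (val y) (val z)).

(* Coordinates of a real vector s : 'I_b -> R, extended by s_0 = 1, s_{b+1}=0. *)
Definition sext (R : realType) (b : nat) (s : 'I_b -> R) (k : nat) : R :=
  if k == 0%N then 1 else nth 0 [seq s i | i <- enum 'I_b] k.-1.

Definition fdrift (R : realType) (b : nat) (lam : R) (s : 'I_b -> R) (k : nat) : R :=
  lam * (sext s k.-1 ^+ 2 - sext s k ^+ 2) - (sext s k - sext s k.+1).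

Definition is_fixed_point (R : realType) (b : nat) (lam : R) (s : 'I_b -> R) : Prop :=
  (forall k : nat, (k <= b)%N -> sext s k.+1 <= sext s k) /\
  (forall i : 'I_b, fdrift lam s i.+1 = 0).

(* Main.v *)
Require Import Defs.
From HB Require Import structures.
From mathcomp Require Import all_boot all_order all_algebra.
From mathcomp Require Import all_classical all_reals all_analysis.
From mathcomp Require Import ring lra zify.
Import Order.TTheory GRing.Theory Num.Theory.
Local Open Scope ring_scope.


Section Core.
Variable R : realType.
Implicit Types (s t : nat -> R) (x y eta : R).

Definition hh eta x : R := Num.sqrt (x ^+ 2 + eta ^+ 2).

Lemma hh_ge0 eta x : 0 <= hh eta x.
Proof. exact: sqrtr_ge0. Qed.

Lemma hh_sq eta x : hh eta x ^+ 2 = x ^+ 2 + eta ^+ 2.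
Proof. by rewrite sqr_sqrtr // addr_ge0 // sqr_ge0. Qed.

Lemma le_sq_abs (u w : R) : 0 <= w -> u ^+ 2 <= w ^+ 2 -> u <= w.
Proof. move=> w0 h; nra. Qed.

Lemma hh_abs eta x : `|x| <= hh eta x.
Proof.
apply: le_sq_abs; first exact: hh_ge0.
rewrite hh_sq real_normK ?num_real //; have := sqr_ge0 eta; lra.
Qed.

Lemma hh_le eta x : 0 <= eta -> hh eta x <= `|x| + eta.
Proof.
move=> e0; apply: le_sq_abs; first by rewrite addr_ge0.
rewrite hh_sq; have := normr_ge0 x; have := real_normK (num_real x); nra.
Qed.

Lemma hh_ge_eta eta x : 0 <= eta -> eta <= hh eta x.
Proof.
move=> e0; apply: le_sq_abs; first exact: hh_ge0.
rewrite hh_sq; have := sqr_ge0 x; lra.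
Qed.

Lemma hh_prod_abs eta x y : `|x * y| + eta ^+ 2 <= hh eta x * hh eta y.
Proof.
apply: le_sq_abs; first by rewrite mulr_ge0 // hh_ge0.
rewrite exprMn !hh_sq normrM.
rewrite -(real_normK (num_real x)) -(real_normK (num_real y)).
have := sqr_ge0 (eta * (`|x| - `|y|)).
set a := `|x|; set b := `|y| => h.
have -> : (a * b + eta ^+ 2) ^+ 2 = (a ^+ 2 + eta ^+ 2) * (b ^+ 2 + eta ^+ 2) - (eta * (a - b)) ^+ 2 by ring.
lra.
Qed.

Lemma hh_prod eta x y : x * y + eta ^+ 2 <= hh eta x * hh eta y.
Proof. apply: le_trans (hh_prod_abs eta x y); rewrite lerD2r; exact: ler_norm. Qed.

Lemma hh_lip eta x y : `|hh eta y - hh eta x| <= `|y - x|.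
Proof.
rewrite -[`|_ - hh _ _|]sqrtr_sqr -[`|y - x|]sqrtr_sqr ler_sqrt ?sqr_ge0 //.
have := hh_prod eta x y; have := hh_sq eta x; have := hh_sq eta y.
set A := hh eta x; set B := hh eta y => hB hA hp.
have -> : (B - A) ^+ 2 = B ^+ 2 + A ^+ 2 - 2 * (A * B) by ring.
rewrite hA hB; nra.
Qed.

Definition sg eta x := x / hh eta x.

Lemma sg_abs eta x : 0 < eta -> `|sg eta x| <= 1.
Proof.
move=> e0; have hp : 0 < hh eta x := lt_le_trans e0 (hh_ge_eta eta x (ltW e0)).
rewrite /sg normrM normfV (ger0_norm (hh_ge0 _ _)) ler_pdivrMr // mul1r; exact: hh_abs.
Qed.

Lemma sg_mul eta x : 0 < eta -> `|x| - eta <= sg eta x * x.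
Proof.
move=> e0; have hp : 0 < hh eta x := lt_le_trans e0 (hh_ge_eta eta x (ltW e0)).
rewrite /sg mulrAC -expr2 ler_pdivlMr //.
have := hh_le eta x (ltW e0); have := real_normK (num_real x); have := normr_ge0 x.
set A := hh eta x in hp * => hn hk hl.
rewrite -hk; set a := `|x| in hn hl *.
case: (lerP a eta) => hx.
  have : (a - eta) * A <= 0 by rewrite mulr_le0_ge0 ?subr_le0 // ltW.
  have := sqr_ge0 a; lra.
have h1 : (a - eta) * A <= (a - eta) * (a + eta) by rewrite ler_pM2l ?subr_gt0.
have := sqr_ge0 eta; have -> : a ^+ 2 = (a - eta) * (a + eta) + eta ^+ 2 by ring.
lra.
Qed.

Lemma hh_taylor eta x c : 0 < eta ->
  hh eta (x + c) <= hh eta x + sg eta x * c + c ^+ 2 / (2 * eta).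
Proof.
move=> e0.
have hA : eta <= hh eta x := hh_ge_eta eta x (ltW e0).
have hp : 0 < hh eta x := lt_le_trans e0 hA.
have hpr := hh_prod_abs eta x (x + c).
have hsA := hh_sq eta x; have hsB := hh_sq eta (x + c).
have hB0 := hh_ge0 eta (x + c).
set A := hh eta x in hA hp hpr hsA *; set B := hh eta (x + c) in hpr hsB hB0 *.
set m := x * (x + c) + eta ^+ 2.
have hP2 : (A * B) ^+ 2 = m ^+ 2 + eta ^+ 2 * c ^+ 2.
  by rewrite exprMn hsA hsB /m; ring.
have hm : 2 * eta ^+ 2 <= A * B + m.
  have := real_normK (num_real (x * (x + c))).
  have := ler_norm (- (x * (x + c))); rewrite normrN /m; lra.
have hPm : A * B - m <= c ^+ 2 / 2.
  have h1 : (A * B - m) * (A * B + m) = eta ^+ 2 * c ^+ 2.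
    by rewrite -subr_sqr hP2; ring.
  have he2 : 0 < eta ^+ 2 by rewrite exprn_gt0.
  have hc2 := sqr_ge0 c.
  nra.
rewrite /sg.
have key : A * (B - A - x / A * c) <= A * (c ^+ 2 / (2 * eta)).
  have -> : A * (B - A - x / A * c) = A * B - m.
    rewrite /m mulrBr mulrBr; rewrite [A * (x / A * c)]mulrA mulrCA divff ?gt_eqF //.
    rewrite mulr1 -expr2 hsA; ring.
  apply: (le_trans hPm).
  have -> : A * (c ^+ 2 / (2 * eta)) = (A / eta) * (c ^+ 2 / 2).
    by rewrite invfM; field; rewrite gt_eqF.
  rewrite ler_peMl ?divr_ge0 ?sqr_ge0 // ler_pdivlMr // mul1r //.
move: key; rewrite ler_pM2l //; lra.
Qed.


Lemma sum_shift (F : nat -> R) (b : nat) :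
  \sum_(i < b) F i.+1 = \sum_(i < b) F i + F b - F 0%N.
Proof.
elim: b => [|b IH]; first by rewrite !big_ord0; ring.
by rewrite big_ord_recr /= IH big_ord_recr /=; ring.
Qed.

Definition QQ t (j : nat) : R := \prod_(i < j) (1 + t i.+1).
Definition vv (b : nat) t (k : nat) : R := \sum_(i < k) (b - i)%:R / QQ t i.
Definition HH b t eta s : R := \sum_(i < b) vv b t i.+1 * hh eta (s i.+1 - t i.+1).
Definition WW b t eta s : R := HH b t eta s ^+ 2.
Definition upd s k c : nat -> R := fun j => if j == k then s j + c else s j.
Definition L1 b s t : R := \sum_(i < b) `|s i.+1 - t i.+1|.
Definition Gen b lam n t eta s : R :=
  \sum_(i < b) (lam * n * (s i ^+ 2 - s i.+1 ^+ 2) *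
                  (WW b t eta (upd s i.+1 n^-1) - WW b t eta s)
              + n * (s i.+1 - s i.+2) *
                  (WW b t eta (upd s i.+1 (- n^-1)) - WW b t eta s)).

Lemma QQ_rec t i : QQ t i.+1 = QQ t i * (1 + t i.+1).
Proof. by rewrite /QQ big_ord_recr. Qed.

Lemma QQ_ge1 t i : (forall k, 0 <= t k) -> 1 <= QQ t i.
Proof.
move=> ht; elim: i => [|i IH]; first by rewrite /QQ big_ord0.
rewrite QQ_rec; have := ht i.+1; nra.
Qed.

Lemma vv_rec b t i : vv b t i.+1 = vv b t i + (b - i)%:R / QQ t i.
Proof. by rewrite /vv big_ord_recr. Qed.

Lemma vv0 b t : vv b t 0 = 0.
Proof. by rewrite /vv big_ord0. Qed.

Lemma vv_ge0 b t k : (forall k, 0 <= t k) -> 0 <= vv b t k.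
Proof.
move=> ht; rewrite /vv sumr_ge0 // => i _.
by rewrite divr_ge0 // (le_trans ler01 (QQ_ge1 _ _ ht)).
Qed.

Lemma vv_le b t k : (forall k, 0 <= t k) -> vv b t k <= k%:R * b%:R.
Proof.
move=> ht; elim: k => [|k IH]; first by rewrite vv0 mul0r.
rewrite vv_rec -addn1 natrD mulrDl mul1r lerD //.
have hq := QQ_ge1 t k ht.
rewrite ler_pdivrMr ?(lt_le_trans ltr01) //.
have : (b - k)%:R <= b%:R :> R by rewrite ler_nat leq_subr.
have : 0 <= (b - k)%:R :> R by rewrite ler0n.
have : 0 <= b%:R :> R by rewrite ler0n.
nra.
Qed.

Lemma vv_ge1 b t k : (forall k, 0 <= t k) -> (1 <= b)%N -> (1 <= k)%N -> 1 <= vv b t k.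
Proof.
move=> ht hb; case: k => // k _; rewrite /vv big_ord_recl /=.
rewrite /QQ big_ord0 divr1 subn0.
have : 1 <= b%:R :> R by rewrite ler1n.
have : 0 <= \sum_(i < k) (b - lift ord0 i)%:R / \prod_(i0 < lift ord0 i) (1 + t i0.+1).
  rewrite sumr_ge0 // => i _; rewrite divr_ge0 //.
  exact: (le_trans ler01 (QQ_ge1 _ _ ht)).
lra.
Qed.

Lemma HH_upd b t eta s i c : (i < b)%N ->
  HH b t eta (upd s i.+1 c) = HH b t eta s +
    vv b t i.+1 * (hh eta (s i.+1 - t i.+1 + c) - hh eta (s i.+1 - t i.+1)).
Proof.
move=> hi; rewrite /HH (bigD1 (Ordinal hi)) //= [in RHS](bigD1 (Ordinal hi)) //=.
rewrite /upd eqxx.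
have -> : s i.+1 + c - t i.+1 = s i.+1 - t i.+1 + c by ring.
rewrite (eq_bigr (fun j : 'I_b => vv b t j.+1 * hh eta (s j.+1 - t j.+1))); first ring.
move=> j hj; rewrite ifF //; apply/negbTE; move: hj; apply: contra.
by rewrite eqSS => /eqP e; apply/eqP/val_inj.
Qed.

Lemma HH_ge0 b t eta s : (forall k, 0 <= t k) -> 0 <= HH b t eta s.
Proof.
move=> ht; rewrite /HH sumr_ge0 // => i _; rewrite mulr_ge0 ?vv_ge0 ?hh_ge0 //.
Qed.

Lemma WW_jump b t eta s i c : (i < b)%N -> (forall k, 0 <= t k) -> 0 < eta ->
  WW b t eta (upd s i.+1 c) - WW b t eta s <=
  2 * HH b t eta s * vv b t i.+1 * (sg eta (s i.+1 - t i.+1) * c + c ^+ 2 / (2 * eta))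
  + vv b t i.+1 ^+ 2 * c ^+ 2.
Proof.
move=> hi ht e0; rewrite /WW HH_upd //.
set H := HH b t eta s; set v := vv b t i.+1; set x := s i.+1 - t i.+1.
have hH : 0 <= H by apply: HH_ge0.
have hv : 0 <= v by apply: vv_ge0.
have hT := hh_taylor eta x c e0.
have hL := hh_lip eta x (x + c).
set D := hh eta (x + c) - hh eta x in hL *.
have hD : D <= sg eta x * c + c ^+ 2 / (2 * eta) by rewrite /D; lra.
have hD2 : D ^+ 2 <= c ^+ 2.
  rewrite -(real_normK (num_real D)) -(real_normK (num_real c)).
  have e : x + c - x = c by ring.
  rewrite e in hL.
  by rewrite ler_sqr ?normr_ge0.
have -> : (H + v * D) ^+ 2 - H ^+ 2 = 2 * H * v * D + v ^+ 2 * D ^+ 2 by ring.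
rewrite lerD //.
  by rewrite ler_wpM2l // ?mulr_ge0.
by rewrite ler_wpM2l // sqr_ge0.
Qed.


Lemma sg_le_abs eta x y : 0 < eta -> sg eta x * y <= `|y|.
Proof.
move=> e0; apply: le_trans (ler_norm _) _; rewrite normrM.
have := sg_abs eta x e0; have := normr_ge0 y; nra.
Qed.

Lemma drift_term (eta lam v s0 s1 s2 t0 t1 t2 : R) :
  0 < eta -> 0 <= lam <= 1 -> 0 <= v ->
  0 <= s1 <= 1 -> 0 <= t1 <= 1 ->
  lam * (t0 ^+ 2 - t1 ^+ 2) - (t1 - t2) = 0 ->
  v * (sg eta (s1 - t1) * (lam * (s0 ^+ 2 - s1 ^+ 2) - (s1 - s2))) <=
  v * (lam * `|s0 ^+ 2 - t0 ^+ 2| - lam * `|s1 ^+ 2 - t1 ^+ 2|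
       - `|s1 - t1| + `|s2 - t2|) + 3 * eta * v.
Proof.
move=> e0 /andP[l0 l1] v0 /andP[s10 s11] /andP[t10 t11] fp.
set sig := sg eta (s1 - t1).
have e1 : lam * (s0 ^+ 2 - s1 ^+ 2) - (s1 - s2) =
  lam * (s0 ^+ 2 - t0 ^+ 2) - lam * ((s1 + t1) * (s1 - t1)) - (s1 - t1) + (s2 - t2).
  by move: fp; set z := lam * _ - _ => fp; rewrite -[LHS]subr0 -fp /z; ring.
rewrite e1.
have h0 := sg_le_abs eta (s1 - t1) (s0 ^+ 2 - t0 ^+ 2) e0.
have h2 := sg_le_abs eta (s1 - t1) (s2 - t2) e0.
have h1 := sg_mul eta (s1 - t1) e0.
have hp : `|s1 ^+ 2 - t1 ^+ 2| = (s1 + t1) * `|s1 - t1|.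
  by rewrite -(ger0_norm (addr_ge0 s10 t10)) -normrM; congr `|_|; ring.
rewrite hp.
rewrite -/sig in h0 h1 h2.
set a := s1 + t1. have a0 : 0 <= a by rewrite addr_ge0. have a2 : a <= 2 by rewrite /a; lra.
set d := `|s1 - t1| in h1 *.
have k1 : lam * a * (d - eta) <= lam * a * (sig * (s1 - t1)).
  by rewrite ler_wpM2l // mulr_ge0.
have la : lam * a <= 1 * 2 by apply: ler_pM.
have k2 : lam * a * eta <= 2 * eta by rewrite mul1r in la; rewrite ler_wpM2r // ltW.
have k3 : sig * (lam * (s0 ^+ 2 - t0 ^+ 2)) <= lam * `|s0 ^+ 2 - t0 ^+ 2|.
  by rewrite mulrCA ler_wpM2l.
suff : sig * (lam * (s0 ^+ 2 - t0 ^+ 2) - lam * (a * (s1 - t1)) - (s1 - t1) + (s2 - t2)) <=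
  lam * `|s0 ^+ 2 - t0 ^+ 2| - lam * (a * d) - d + `|s2 - t2| + 3 * eta.
  move=> h; have h' := ler_wpM2l v0 h; apply: (le_trans h').
  rewrite /d; rewrite le_eqVlt; apply/orP; left; apply/eqP; ring.
have -> : sig * (lam * (s0 ^+ 2 - t0 ^+ 2) - lam * (a * (s1 - t1)) - (s1 - t1) + (s2 - t2)) =
  sig * (lam * (s0 ^+ 2 - t0 ^+ 2)) - lam * a * (sig * (s1 - t1)) - sig * (s1 - t1) + sig * (s2 - t2) by ring.
lra.
Qed.


Lemma tele_term (lam m q tt ss x : R) :
  0 <= lam <= 1 -> 0 <= m -> 1 <= q -> 0 <= tt <= 1 -> 0 <= ss <= 1 ->
  (1 - lam) * q <= 1 ->
  m / (q * (1 + tt)) * (lam * `|ss ^+ 2 - tt ^+ 2|) - (m + 1) / q * `|ss - tt|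
  <= - (1 - lam) * `|ss - tt|.
Proof.
move=> /andP[l0 l1] m0 q1 /andP[t0 t1] /andP[s0 s1] hq.
have q0 : 0 < q by apply: lt_le_trans q1.
have tp : 0 < 1 + tt by lra.
have hp : `|ss ^+ 2 - tt ^+ 2| = (ss + tt) * `|ss - tt|.
  by rewrite -(ger0_norm (addr_ge0 s0 t0)) -normrM; congr `|_|; ring.
rewrite hp; set d := `|ss - tt|; have d0 : 0 <= d := normr_ge0 _.
have k1 : lam * ((ss + tt) * d) <= (1 + tt) * d.
  rewrite mulrA ler_wpM2r //; have : lam * (ss + tt) <= 1 * (ss + tt).
    by rewrite ler_wpM2r // addr_ge0.
  lra.
have k2 : m / (q * (1 + tt)) * (lam * ((ss + tt) * d)) <= m / (q * (1 + tt)) * ((1 + tt) * d).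
  by rewrite ler_wpM2l // divr_ge0 // mulr_ge0 // ltW.
have e : m / (q * (1 + tt)) * ((1 + tt) * d) = m / q * d.
  by field; rewrite !gt_eqF.
rewrite e in k2.
have k3 : (1 - lam) * d <= d / q.
  rewrite ler_pdivlMr // mulrAC ler_piMl //.
apply: (le_trans (lerB k2 (lexx _))).
have -> : m / q * d - (m + 1) / q * d = - (d / q) by field; rewrite gt_eqF.
lra.
Qed.

Lemma tele b lam t s :
  (1 <= b)%N -> 0 <= lam <= 1 -> s 0%N = 1 -> t 0%N = 1 -> s b.+1 = 0 -> t b.+1 = 0 ->
  (forall k, 0 <= s k <= 1) -> (forall k, 0 <= t k <= 1) ->
  (forall i, (i <= b)%N -> (1 - lam) * QQ t i <= 1) ->
  \sum_(i < b) vv b t i.+1 * (lam * `|s i ^+ 2 - t i ^+ 2| - lam * `|s i.+1 ^+ 2 - t i.+1 ^+ 2|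
       - `|s i.+1 - t i.+1| + `|s i.+2 - t i.+2|) <= - (1 - lam) * L1 b s t.
Proof.
move=> hb hl hs0 ht0 hsb htb hs ht hq.
have ht0' : forall k, 0 <= t k by move=> k; case/andP: (ht k).
pose v := vv b t.
pose P j := lam * `|s j ^+ 2 - t j ^+ 2|.
pose Dd j := `|s j - t j|.
have eq1 : \sum_(i < b) vv b t i.+1 * (lam * `|s i ^+ 2 - t i ^+ 2| - lam * `|s i.+1 ^+ 2 - t i.+1 ^+ 2|
       - `|s i.+1 - t i.+1| + `|s i.+2 - t i.+2|) =
  \sum_(i < b) v i.+1 * P i - \sum_(i < b) v i.+1 * P i.+1 - \sum_(i < b) v i.+1 * Dd i.+1
  + \sum_(i < b) v i.+1 * Dd i.+2.
  rewrite -sumrB -sumrB -big_split /=; apply: eq_bigr => i _; rewrite /v /P /Dd; ring.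
rewrite eq1.
have s1 := sum_shift (fun j => v j.+1 * P j) b.
have s4 := sum_shift (fun j => v j * Dd j.+1) b.
simpl in s1, s4.
have P0 : P 0%N = 0 by rewrite /P hs0 ht0 expr1n subrr normr0 mulr0.
have D0 : Dd b.+1 = 0 by rewrite /Dd hsb htb subrr normr0.
have v0 : v 0%N = 0 by rewrite /v vv0.
rewrite P0 mulr0 subr0 in s1.
rewrite D0 v0 !mulr0 mul0r addr0 subr0 in s4.
have -> : \sum_(i < b) v i.+1 * P i = \sum_(i < b) v i.+2 * P i.+1 - v b.+1 * P b by rewrite s1; ring.
rewrite s4.
set S1 := \sum_(i < b) v i.+2 * P i.+1.
set S2 := \sum_(i < b) v i.+1 * P i.+1.
set S3 := \sum_(i < b) v i.+1 * Dd i.+1.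
set S4 := \sum_(i < b) v i * Dd i.+1.
have hPb : 0 <= v b.+1 * P b.
  rewrite mulr_ge0 // ?vv_ge0 // /P mulr_ge0 //; by case/andP: hl.
have key : S1 - S2 - S3 + S4 <= - (1 - lam) * L1 b s t.
  have -> : S1 - S2 - S3 + S4 = \sum_(i < b) ((v i.+2 - v i.+1) * P i.+1 - (v i.+1 - v i) * Dd i.+1).
    rewrite /S1 /S2 /S3 /S4 -sumrB -sumrB -big_split /=; apply: eq_bigr => i _; ring.
  rewrite /L1 mulr_sumr; apply: ler_sum => i _.
  rewrite /v !vv_rec.
  have -> : vv b t i + (b - i)%:R / QQ t i + (b - i.+1)%:R / QQ t i.+1 - (vv b t i + (b - i)%:R / QQ t i)
     = (b - i.+1)%:R / QQ t i.+1 by ring.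
  have -> : vv b t i + (b - i)%:R / QQ t i - vv b t i = (b - i)%:R / QQ t i by ring.
  rewrite QQ_rec.
  have -> : (b - i)%:R = (b - i.+1)%:R + 1 :> R.
    by rewrite -(subnSK (ltn_ord i)) natr1.
  rewrite /P /Dd; apply: tele_term => //.
  all: first [ exact: (QQ_ge1 _ _ ht0') | by apply: hq; rewrite ltnW | by rewrite ler0n | idtac ].
lra.
Qed.


Lemma vv_leb2 b t i : (forall k, 0 <= t k) -> (i < b)%N -> vv b t i.+1 <= b%:R ^+ 2.
Proof.
move=> ht hi; apply: le_trans (vv_le b t i.+1 ht) _.
rewrite expr2 ler_wpM2r ?ler0n // ler_nat //.
Qed.

Lemma sq_le (a c : R) : 0 <= a -> a <= c -> a ^+ 2 <= c ^+ 2.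
Proof. move=> ha hc; nra. Qed.

Lemma expr_mono (x : R) m k : 1 <= x -> (m <= k)%N -> x ^+ m <= x ^+ k.
Proof.
move=> hx hmk; rewrite -(subnKC hmk) exprD ler_peMr ?exprn_ege1 //.
by rewrite exprn_ge0 // (le_trans ler01 hx).
Qed.

Lemma sum_const_le b (F : nat -> R) (c : R) : (forall i, (i < b)%N -> F i <= c) ->
  \sum_(i < b) F i <= c * b%:R.
Proof.
move=> h; apply: le_trans (ler_sum _ (fun (i : 'I_b) _ => h i (ltn_ord i))) _.
by rewrite sumr_const card_ord mulr_natr.
Qed.

Lemma Gen_bound b lam n t eta s :
 (1 <= b)%N -> 0 <= lam -> lam < 1 -> 0 < n -> 0 < eta -> eta ^+ 2 * n = 1 ->
 s 0%N = 1 -> (forall k, 0 <= s k <= 1) -> (forall k, s k.+1 <= s k) -> s b.+1 = 0 ->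
 t 0%N = 1 -> (forall k, 0 <= t k <= 1) -> t b.+1 = 0 ->
 (forall i, (i < b)%N -> lam * (t i ^+ 2 - t i.+1 ^+ 2) - (t i.+1 - t i.+2) = 0) ->
 (forall i, (i <= b)%N -> (1 - lam) * QQ t i <= 1) ->
 Gen b lam n t eta s <= - (1 - lam) * L1 b s t ^+ 2 + 26 * b%:R ^+ 10 / ((1 - lam) * n).
Proof.
move=> hb l0 l1 n0 e0 hen hs0 hs hsm hsb ht0 ht htb hfp hq.
have ht0' : forall k, 0 <= t k by move=> k; case/andP: (ht k).
set H := HH b t eta s.
have hH : 0 <= H by apply: HH_ge0.
pose v i := vv b t i.+1.
pose sig i := sg eta (s i.+1 - t i.+1).
pose u i := lam * (s i ^+ 2 - s i.+1 ^+ 2).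
pose w i := s i.+1 - s i.+2.
have hn : n = (eta ^+ 2)^-1.
  by apply: (@mulIf _ (eta ^+ 2)); rewrite ?expf_neq0 ?gt_eqF // mulVf ?expf_neq0 ?gt_eqF // mulrC.
have eta_ne0 : eta != 0 by rewrite gt_eqF.
have step1 : Gen b lam n t eta s <=
  \sum_(i < b) (2 * H * (v i * (sig i * (u i - w i))) + 2 * (H * eta * v i + v i ^+ 2 / n)).
  rewrite /Gen; apply: ler_sum => i _.
  have j1 := WW_jump b t eta s i n^-1 (ltn_ord i) ht0' e0.
  have j2 := WW_jump b t eta s i (- n^-1) (ltn_ord i) ht0' e0.
  have hsi := hs i; have hsk := hs i.+1; have hsk2 := hs i.+2.
  have hm1 := hsm i; have hm2 := hsm i.+1.
  have A0 : 0 <= s i ^+ 2 - s i.+1 ^+ 2.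
    case/andP: hsi => ? ?; case/andP: hsk => ? ?; rewrite subr_ge0; nra.
  have A1 : s i ^+ 2 - s i.+1 ^+ 2 <= 1.
    case/andP: hsi => a b'; case/andP: hsk => c d; nra.
  have B0 : 0 <= s i.+1 - s i.+2 by rewrite subr_ge0.
  have B1 : s i.+1 - s i.+2 <= 1 by case/andP: hsk => ? ?; case/andP: hsk2 => ? ?; lra.
  have U0 : 0 <= lam * n * (s i ^+ 2 - s i.+1 ^+ 2) by rewrite !mulr_ge0 // ltW.
  have D0 : 0 <= n * (s i.+1 - s i.+2) by rewrite mulr_ge0 // ltW.
  have m1 := ler_wpM2l U0 j1.
  have m2 := ler_wpM2l D0 j2.
  apply: le_trans (lerD m1 m2) _.
  rewrite -/H.
  set vi := vv b t i.+1; set sg1 := sg eta (s i.+1 - t i.+1).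
  set A := s i ^+ 2 - s i.+1 ^+ 2 in A0 A1 U0 m1 *; set Bv := s i.+1 - s i.+2 in B0 B1 D0 m2 *.
  have hv : 0 <= vi by apply: vv_ge0.
  have -> : lam * n * A * (2 * H * vi * (sg1 * n^-1 + n^-1 ^+ 2 / (2 * eta)) + vi ^+ 2 * n^-1 ^+ 2) +
     n * Bv * (2 * H * vi * (sg1 * - n^-1 + (- n^-1) ^+ 2 / (2 * eta)) + vi ^+ 2 * (- n^-1) ^+ 2)
     = 2 * H * (vi * (sg1 * (lam * A - Bv))) + (lam * A + Bv) * (H * eta * vi + vi ^+ 2 / n).
    rewrite hn; field; exact: eta_ne0.
  rewrite /v /sig /u /w -/vi -/sg1 -/A -/Bv lerD2l.
  have X0 : 0 <= H * eta * vi + vi ^+ 2 / n.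
    apply: addr_ge0; [apply: mulr_ge0; [apply: mulr_ge0 => //; exact: ltW | exact: hv] | apply: divr_ge0; [exact: sqr_ge0 | exact: ltW]].
  have : lam * A <= 1 by have := ltW l1; nra.
  move=> hlA; have : lam * A + Bv <= 2 by lra.
  move=> hs2; rewrite ler_wpM2r //.
have step2 : \sum_(i < b) (2 * H * (v i * (sig i * (u i - w i))) + 2 * (H * eta * v i + v i ^+ 2 / n))
  = 2 * H * (\sum_(i < b) v i * (sig i * (u i - w i))) + 2 * (H * eta * \sum_(i < b) v i)
    + 2 * (\sum_(i < b) v i ^+ 2) / n.
  rewrite big_split /= -!mulr_sumr big_split /= -mulr_sumr -mulr_suml; ring.
have step3 : \sum_(i < b) v i * (sig i * (u i - w i)) <=
   - (1 - lam) * L1 b s t + 3 * eta * \sum_(i < b) v i.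
  apply: le_trans (_ : \sum_(i < b) (vv b t i.+1 * (lam * `|s i ^+ 2 - t i ^+ 2| - lam * `|s i.+1 ^+ 2 - t i.+1 ^+ 2|
       - `|s i.+1 - t i.+1| + `|s i.+2 - t i.+2|) + 3 * eta * v i) <= _).
    apply: ler_sum => i _; rewrite /v /sig /u /w.
    apply: (drift_term eta lam (vv b t i.+1) (s i) (s i.+1) (s i.+2) (t i) (t i.+1) (t i.+2) e0 _ _ (hs i.+1) (ht i.+1) (hfp i (ltn_ord i))).
      by rewrite l0 ltW.
    exact: vv_ge0.
  rewrite big_split /= -mulr_sumr lerD2r; apply: tele => //; by rewrite l0 ltW.
set L := L1 b s t.
set Sv := \sum_(i < b) v i.
set Sv2 := \sum_(i < b) v i ^+ 2.
set Bn := b%:R : R.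
have hB : 1 <= Bn by rewrite /Bn ler1n.
have hL : 0 <= L by rewrite /L /L1 sumr_ge0.
have hHL : L <= H.
  rewrite /L /L1 /H /HH; apply: ler_sum => i _.
  apply: le_trans (hh_abs eta _) _.
  rewrite ler_peMl ?hh_ge0 //; apply: vv_ge1 => //.
have hHU : H <= Bn ^+ 2 * L + eta * Sv.
  rewrite /H /HH /L /L1 /Sv mulr_sumr mulr_sumr -big_split /=; apply: ler_sum => i _.
  have hv := vv_leb2 b t i ht0' (ltn_ord i); have hv0 : 0 <= vv b t i.+1 by apply: vv_ge0.
  have := hh_le eta (s i.+1 - t i.+1) (ltW e0); have := normr_ge0 (s i.+1 - t i.+1).
  rewrite /v; nra.
have hSv : Sv <= Bn ^+ 3.
  rewrite /Sv; apply: le_trans (sum_const_le b v (Bn ^+ 2) _) _.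
    by move=> i hi; apply: vv_leb2.
  by rewrite /Bn -exprSr.
have hSv0 : 0 <= Sv by rewrite /Sv sumr_ge0 // => i _; apply: vv_ge0.
have hSv2 : Sv2 <= Bn ^+ 5.
  rewrite /Sv2; apply: le_trans (sum_const_le b (fun i => v i ^+ 2) (Bn ^+ 4) _) _.
    move=> i hi; have := vv_leb2 b t i ht0' hi; have := vv_ge0 b t i.+1 ht0'; rewrite /v.
    move=> a1 a2; have -> : Bn ^+ 4 = (Bn ^+ 2) ^+ 2 by rewrite -exprM.
    exact: sq_le.
  by rewrite /Bn -exprSr.
have G1 := step1; rewrite step2 in G1.
set eps := 1 - lam.
have he : 0 < eps by rewrite subr_gt0.
have he1 : eps <= 1 by rewrite /eps; lra.
set Dsum := \sum_(i < b) v i * (sig i * (u i - w i)) in step3 G1.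
move: G1 step3; rewrite -/Sv -/Sv2 -/eps => G1 step3.
have G2 : Gen b lam n t eta s <= 2 * H * (- eps * L + 4 * eta * Sv) + 2 * Sv2 / n.
  apply: le_trans G1 _.
  have : 2 * H * Dsum <= 2 * H * (- eps * L + 3 * eta * Sv) by rewrite ler_wpM2l // mulr_ge0.
  move=> k; have -> : 2 * H * (- eps * L + 4 * eta * Sv) = 2 * H * (- eps * L + 3 * eta * Sv) + 2 * (H * eta * Sv) by ring.
  lra.
set e := 4 * eta * Sv.
have e0' : 0 <= e by rewrite /e !mulr_ge0 // ltW.
have G3 : 2 * H * (- eps * L + e) <= - 2 * eps * L ^+ 2 + 2 * e * (Bn ^+ 2 * L + eta * Sv).
  have k1 : eps * L * L <= eps * L * H by rewrite ler_wpM2l // mulr_ge0 // ltW.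
  have k2 : e * H <= e * (Bn ^+ 2 * L + eta * Sv) by rewrite ler_wpM2l.
  nra.
have G4 : 2 * e * Bn ^+ 2 * L <= eps * L ^+ 2 + e ^+ 2 * Bn ^+ 4 / eps.
  have := sqr_ge0 (eps * L - e * Bn ^+ 2).
  move=> h; rewrite -(ler_pM2l he).
  have -> : eps * (eps * L ^+ 2 + e ^+ 2 * Bn ^+ 4 / eps) = (eps * L) ^+ 2 + (e * Bn ^+ 2) ^+ 2.
    by field; rewrite gt_eqF.
  nra.
have he2 : eta ^+ 2 = n^-1 by rewrite hn invrK.
have G5 : e ^+ 2 * Bn ^+ 4 / eps + 2 * e * (eta * Sv) + 2 * Sv2 / n <= 26 * Bn ^+ 10 / (eps * n).
  have -> : e ^+ 2 * Bn ^+ 4 / eps + 2 * e * (eta * Sv) + 2 * Sv2 / n =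
     (16 * Sv ^+ 2 * Bn ^+ 4 / eps + 8 * Sv ^+ 2 + 2 * Sv2) / n.
    rewrite /e hn; field; rewrite ?gt_eqF //.
  have -> : 26 * Bn ^+ 10 / (eps * n) = (26 * Bn ^+ 10 / eps) / n.
    by rewrite invfM mulrA.
  rewrite ler_pM2r ?invr_gt0 //.
  have hS2 : Sv ^+ 2 <= Bn ^+ 6.
    have -> : Bn ^+ 6 = (Bn ^+ 3) ^+ 2 by rewrite -exprM.
    exact: sq_le.
  have b6 : Bn ^+ 6 <= Bn ^+ 10 by apply: expr_mono.
  have b5 : Bn ^+ 5 <= Bn ^+ 10 by apply: expr_mono.
  have b4 : 0 <= Bn ^+ 4 by rewrite exprn_ge0 // (le_trans ler01 hB).
  have k1 : 16 * Sv ^+ 2 * Bn ^+ 4 / eps <= 16 * Bn ^+ 10 / eps.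
    rewrite ler_pM2r ?invr_gt0 //.
    have -> : Bn ^+ 10 = Bn ^+ 6 * Bn ^+ 4 by rewrite -exprD.
    by rewrite -mulrA ler_pM2l // ler_wpM2r.
  have k2 : Bn ^+ 10 <= Bn ^+ 10 / eps.
    rewrite ler_pdivlMr // ler_piMr // exprn_ge0 // (le_trans ler01 hB).
  lra.
have G2' : Gen b lam n t eta s <= 2 * H * (- eps * L + e) + 2 * Sv2 / n := G2.
move: G2' G3 G4 G5; set X := e ^+ 2 * Bn ^+ 4 / eps. lra.
Qed.


Lemma fp_facts b lam t : 0 <= lam <= 1 -> t 0%N = 1 -> (forall k, (b < k)%N -> t k = 0) ->
  (forall k, (k <= b)%N -> t k.+1 <= t k) ->
  (forall i, (i < b)%N -> lam * (t i ^+ 2 - t i.+1 ^+ 2) - (t i.+1 - t i.+2) = 0) ->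
  (forall k, 0 <= t k <= 1) /\ (forall i, (i <= b)%N -> (1 - lam) * QQ t i <= 1).
Proof.
move=> /andP[l0 l1] t0 tbig tmon tfp.
have tpos : forall k, 0 <= t k.
  have H : forall d, (d <= b.+1)%N -> 0 <= t (b.+1 - d)%N.
    elim=> [|d IH] hd; first by rewrite subn0 tbig.
    apply: le_trans (IH (ltnW hd)) _.
    rewrite -(subnSK hd); apply: tmon; rewrite -ltnS subnSK //; exact: leq_subr.
  move=> k; case: (leqP k b.+1) => hk; last by rewrite tbig // ltnW.
  by rewrite -(subKn hk); apply: H; exact: leq_subr.
have tle1 : forall k, t k <= 1.
  elim=> [|k IH]; first by rewrite t0.
  case: (leqP k b) => hk; first exact: le_trans (tmon k hk) IH.
  rewrite tbig; [exact: ler01 | exact: ltnW].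
split; first by move=> k; rewrite tpos tle1.
pose g i := t i.+1 - lam * t i ^+ 2.
have gle : forall i, (i <= b)%N -> g i <= 0.
  have H : forall d, (d <= b)%N -> g (b - d)%N <= 0.
    elim=> [|d IH] hd.
      rewrite subn0 /g tbig // sub0r oppr_le0 mulr_ge0 // sqr_ge0 //.
    have e : g (b - d.+1)%N = g (b - d)%N.
      have hi : (b - d.+1 < b)%N by rewrite -subSn // subSS leq_subr.
      have := tfp _ hi; rewrite /g -(subnSK hd) => h.
      by apply/eqP; rewrite -subr_eq0; apply/eqP; rewrite -oppr0 -h; ring.
    by rewrite e IH // ltnW.
  by move=> i hi; rewrite -(subKn hi); apply: H; exact: leq_subr.
have tsq : forall i, (i <= b)%N -> t i.+1 <= t i ^+ 2.
  move=> i hi; have := gle i hi; rewrite /g => h.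
  have : lam * t i ^+ 2 <= t i ^+ 2 by rewrite ler_piMl ?sqr_ge0.
  lra.
have t1 : t 1%N <= lam by have := gle 0%N (leq0n _); rewrite /g t0 expr1n mulr1; lra.
have claim : forall j, (1 <= j <= b)%N -> (1 - t 1%N) * QQ t j <= 1 - t j ^+ 2.
  elim=> // j IH /andP[h1 h2].
  rewrite QQ_rec.
  case: j IH h1 h2 => [|j] IH _ h2.
    by rewrite /QQ big_ord0 mul1r; nra.
  have := IH (ltnW h2); rewrite mulrA => h.
  have hp : 0 <= 1 + t j.+2 by have := tpos j.+2; lra.
  apply: le_trans (ler_wpM2r hp h) _.
  have := tsq j.+1 (ltnW h2); have := tpos j.+2; nra.
move=> i hi; case: i hi => [|i] hi.
  by rewrite /QQ big_ord0 mulr1; lra.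
have hq := QQ_ge1 t i.+1 tpos.
have h := claim i.+1 hi.
have : (1 - lam) * QQ t i.+1 <= (1 - t 1%N) * QQ t i.+1.
  by rewrite ler_wpM2r ?(le_trans ler01 hq) //; lra.
have := sqr_ge0 (t i.+1); lra.
Qed.

End Core.
Arguments hh {R}. Arguments sg {R}. Arguments QQ {R}. Arguments vv {R}. Arguments HH {R}.
Arguments WW {R}. Arguments upd {R}. Arguments L1 {R}. Arguments Gen {R}.


Section Asym.
Variable R : realType.

Lemma powR_ge1' (x r : R) : 1 <= x -> 0 <= r -> 1 <= x `^ r.
Proof.
move=> hx hr; have := ler_powR hx hr; rewrite powRr0; exact.
Qed.

Lemma ln_le_pow (x p : R) : 1 <= x -> 0 < p -> ln x <= x `^ p / p.
Proof.
move=> hx hp.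
have x0 : 0 < x by apply: lt_le_trans hx.
have h1 : ln (x `^ p) <= x `^ p - 1.
  have e : x `^ p = 1 + (x `^ p - 1) by ring.
  rewrite [X in ln X]e; apply: le_ln1Dx.
  have := powR_gt0 p x0; lra.
rewrite ln_powR in h1.
rewrite ler_pdivlMr //; rewrite mulrC; lra.
Qed.

Lemma asympt (gamma alpha xi C : R) (b : nat -> nat) (N1 : nat) :
  0 < gamma -> 0 <= alpha -> 0 < xi ->
  (forall N, (N1 <= N)%N -> (b N)%:R <= C * ln (N%:R : R)) ->
  exists N0 : nat, (1 <= N0)%N /\ forall N : nat, (N0 <= N)%N ->
    26 * (b N)%:R ^+ 10 / (gamma / (N%:R `^ alpha) * N%:R) / (gamma / (N%:R `^ alpha))
    <= 1 / (N%:R `^ (1 - 4 * alpha - 7 * xi)).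
Proof.
move=> g0 a0 x0 hb.
set p := xi / 10.
have p0 : 0 < p by rewrite /p divr_gt0.
set M := 26 * (`|C| / p) ^+ 10 / gamma ^+ 2.
have M0 : 0 <= M by rewrite /M !mulr_ge0 ?invr_ge0 ?exprn_ge0 ?divr_ge0 // ltW.
set X := M `^ (1 / (6 * xi)).
exists (maxn N1 (maxn 1 (Num.Def.trunc X).+1)); split; first by rewrite leq_max leq_max leqnn orbT.
move=> N; rewrite !geq_max => /andP[hN1 /andP[hN hX]].
set n := N%:R : R.
have n1 : 1 <= n by rewrite /n ler1n.
have n0 : 0 < n by apply: lt_le_trans n1.
have nX : X <= n.
  apply: le_trans (ltW (truncnS_gt X)) _; rewrite /n ler_nat //.
set B := (b N)%:R : R.
have B0 : 0 <= B by rewrite /B ler0n.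
have hB : B <= `|C| * (n `^ p / p).
  apply: le_trans (hb N hN1) _; rewrite -/n.
  apply: le_trans (_ : `|C| * ln n <= _).
    by rewrite ler_wpM2r ?ln_ge0 // ler_norm.
  by rewrite ler_wpM2l // ln_le_pow.
have hB10 : B ^+ 10 <= (`|C| / p) ^+ 10 * n `^ xi.
  have e : n `^ xi = (n `^ p) ^+ 10.
    by rewrite -powR_mulrn ?powR_ge0 // -powRrM /p mulfVK // pnatr_eq0.
  rewrite e -exprMn; apply: lerXn2r; rewrite ?nnegrE //.
    by rewrite mulr_ge0 ?powR_ge0 // divr_ge0 // ltW.
  by apply: le_trans hB _; rewrite mulrA mulrAC.
have hM : M <= n `^ (6 * xi).
  have e : M = X `^ (6 * xi).
    rewrite /X -powRrM mulrC mulrA mulr1 divff ?powRr1 //.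
    by rewrite mulf_neq0 // gt_eqF.
  rewrite e; apply: ge0_ler_powR; rewrite ?nnegrE ?powR_ge0 //.
  all: try by rewrite mulr_ge0 // ltW.
  all: try exact: ltW.
set a := n `^ alpha.
have a1 : 1 <= a by apply: powR_ge1'.
have a0' : 0 < a by apply: lt_le_trans a1.
have nne0 : n != 0 by rewrite gt_eqF.
have hR : 1 / n `^ (1 - 4 * alpha - 7 * xi) = a ^+ 2 * n `^ (2 * alpha + 7 * xi) / n.
  have -> : 1 - 4 * alpha - 7 * xi = 1 - (4 * alpha + 7 * xi) by ring.
  rewrite powRB ?nne0 ?implybT // powRr1 ?ltW //.
  have -> : 4 * alpha + 7 * xi = (alpha + alpha) + (2 * alpha + 7 * xi) by ring.
  rewrite !powRD ?nne0 ?implybT // -/a expr2.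
  have h1 : 0 < n `^ (2 * alpha + 7 * xi) by apply: powR_gt0.
  field; rewrite !gt_eqF ?powR_gt0 //.
rewrite hR.
have hL : 26 * B ^+ 10 / (gamma / a * n) / (gamma / a) = a ^+ 2 * (26 * B ^+ 10 / gamma ^+ 2) / n.
  by field; rewrite !gt_eqF.
rewrite hL ler_pM2r ?invr_gt0 // ler_pM2l ?exprn_gt0 //.
have e2 : n `^ (2 * alpha + 7 * xi) = n `^ (2 * alpha) * (n `^ (6 * xi) * n `^ xi).
  rewrite -!powRD ?nne0 ?implybT //; congr (_ `^ _); ring.
rewrite e2.
have h2a : 1 <= n `^ (2 * alpha) by apply: powR_ge1'; rewrite // mulr_ge0.
have hxi : 0 <= n `^ xi := powR_ge0 _ _.
have h6 : 0 <= n `^ (6 * xi) := powR_ge0 _ _.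
rewrite ler_pdivrMr ?exprn_gt0 //.
apply: le_trans (_ : n `^ (6 * xi) * n `^ xi * gamma ^+ 2 <= _); last first.
  rewrite ler_wpM2r ?sqr_ge0 //; rewrite ler_peMl //; by rewrite mulr_ge0.
have : 26 * B ^+ 10 <= 26 * ((`|C| / p) ^+ 10 * n `^ xi) by rewrite ler_pM2l.
move=> k; apply: le_trans k _.
have : M * gamma ^+ 2 = 26 * (`|C| / p) ^+ 10 by rewrite /M -mulrA mulVf ?mulr1 // expf_neq0 // gt_eqF.
move=> eM.
have := ler_wpM2r (sqr_ge0 gamma) hM; rewrite eM => hM'.
have := ler_wpM2r hxi hM'. nra.
Qed.

End Asym.


Section MC.
Variable R : realType.
Variables (N b : nat).

Definition xn (x : {ffun 'I_b -> 'I_N.+1}) (k : nat) : nat :=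
  nth 0%N [seq (x i : nat) | i <- enum 'I_b] k.

Lemma sfrac_S (x : {ffun 'I_b -> 'I_N.+1}) k : sfrac R x k.+1 = (xn x k)%:R / N%:R.
Proof.
rewrite /sfrac /= /xn; elim: (enum 'I_b) k => [|a s IH] [|k] //=; by rewrite mul0r.
Qed.

Lemma sfrac_0 (x : {ffun 'I_b -> 'I_N.+1}) : sfrac R x 0%N = 1.
Proof. by []. Qed.

Lemma xn_ord x (i : 'I_b) : xn x i = x i.
Proof. by rewrite /xn (nth_map i) ?size_enum_ord // nth_ord_enum. Qed.

Lemma xn_big x k : (b <= k)%N -> xn x k = 0%N.
Proof. by move=> hk; rewrite /xn nth_default // size_map size_enum_ord. Qed.

Lemma xn_leN x k : (xn x k <= N)%N.
Proof.
case: (ltnP k b) => hk; last by rewrite xn_big.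
by have := xn_ord x (Ordinal hk) => /= ->; rewrite -ltnS ltn_ord.
Qed.

Lemma xn_mono x : state_ok x -> forall k l, (k <= l)%N -> (xn x l <= xn x k)%N.
Proof.
move=> /forallP hx k l hkl; case: (ltnP l b) => hl; last by rewrite xn_big.
have hk : (k < b)%N by apply: leq_ltn_trans hl.
have e1 := xn_ord x (Ordinal hl); have e2 := xn_ord x (Ordinal hk); simpl in e1, e2; rewrite e1 e2.
by have /forallP /(_ (Ordinal hl)) /implyP := hx (Ordinal hk); apply.
Qed.

Lemma sext_S (s : 'I_b -> R) k : sext s k.+1 = nth 0 [seq s i | i <- enum 'I_b] k.
Proof. by []. Qed.

Lemma sext_ord (s : 'I_b -> R) (i : 'I_b) : sext s i.+1 = s i.
Proof. by rewrite sext_S (nth_map i) ?size_enum_ord // nth_ord_enum. Qed.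

Lemma sext_big (s : 'I_b -> R) k : (b < k)%N -> sext s k = 0.
Proof.
case: k => // k hk; rewrite sext_S nth_default // size_map size_enum_ord //.
Qed.

Lemma sfrac_facts (x : {ffun 'I_b -> 'I_N.+1}) : (0 < N)%N -> state_ok x ->
  [/\ sfrac R x 0%N = 1, (forall k, 0 <= sfrac R x k <= 1),
      (forall k, sfrac R x k.+1 <= sfrac R x k) & sfrac R x b.+1 = 0].
Proof.
move=> hN hx.
have n0 : 0 < N%:R :> R by rewrite ltr0n.
split.
- exact: sfrac_0.
- case=> [|k]; first by rewrite sfrac_0 ler01 lexx.
  by rewrite sfrac_S divr_ge0 ?ler0n //= ler_pdivrMr // mul1r ler_nat xn_leN.
- case=> [|k]; first by rewrite sfrac_S sfrac_0 ler_pdivrMr // mul1r ler_nat xn_leN.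
  by rewrite !sfrac_S ler_pM2r ?invr_gt0 // ler_nat xn_mono.
- by rewrite sfrac_S xn_big // mul0r.
Qed.


Definition GV (lam : R) (V : state N b -> R) (y : state N b) : R :=
  \sum_(z | z != y) rate lam (val y) (val z) * (V z - V y).

Lemma balance_zero lam pi V : is_stationary lam pi -> \sum_y pi y * GV lam V y = 0.
Proof.
case=> _ [_ hbal].
have e1 : \sum_y pi y * GV lam V y =
   \sum_y \sum_(z | z != y) pi y * rate lam (val y) (val z) * V z -
   \sum_y pi y * V y * \sum_(z | z != y) rate lam (val y) (val z).
  rewrite -sumrB; apply: eq_bigr => y _; rewrite /GV !mulr_sumr -sumrB.
  by apply: eq_bigr => z _; ring.
rewrite e1.
have e2 : \sum_y \sum_(z | z != y) pi y * rate lam (val y) (val z) * V z =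
   \sum_z V z * \sum_(y | y != z) pi y * rate lam (val y) (val z).
  rewrite (exchange_big_dep predT) //=; apply: eq_bigr => z _; rewrite mulr_sumr.
  by apply: eq_big => y; [rewrite eq_sym | move=> _; ring].
rewrite e2; apply/eqP; rewrite subr_eq0; apply/eqP; apply: eq_bigr => z _.
by rewrite hbal; ring.
Qed.

Lemma sum_if0 (P : pred (state N b)) (F : state N b -> R) y :
  \sum_(z | z != y) (if P z then 0 else 0) * F z = 0.
Proof. by apply: big1 => z _; rewrite if_same mul0r. Qed.

Lemma sum_if1 (P : pred (state N b)) (c : R) (F : state N b -> R) y z0 :
  P z0 -> z0 != y -> (forall z, P z -> z = z0) ->
  \sum_(z | z != y) (if P z then c else 0) * F z = c * F z0.
Proof.
move=> hP hne hu; rewrite (bigD1 z0) //= hP big1 ?addr0 // => z /andP[_ hz].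
case: ifP => [/hu e|]; last by rewrite mul0r.
by rewrite e eqxx in hz.
Qed.

Lemma WW_ext t eta (s s' : nat -> R) :
  (forall k, (k < b)%N -> s k.+1 = s' k.+1) -> WW b t eta s = WW b t eta s'.
Proof.
move=> h; rewrite /WW /HH; congr (_ ^+ 2); apply: eq_bigr => i _.
by rewrite h.
Qed.


Lemma xn_sval (y : state N b) (j : 'I_b) : xn (val y) j = val y j.
Proof. exact: xn_ord. Qed.

Lemma up_sum lam eta t (y : state N b) (i : 'I_b) : (0 < N)%N ->
  \sum_(z | z != y) (if [forall j : 'I_b, (val z j : nat) == (val y j + (j == i))%N]
        then lam * N%:R * (sfrac R (val y) i ^+ 2 - sfrac R (val y) i.+1 ^+ 2) else 0) *
     (WW b t eta (sfrac R (val z)) - WW b t eta (sfrac R (val y)))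
  = lam * N%:R * (sfrac R (val y) i ^+ 2 - sfrac R (val y) i.+1 ^+ 2) *
     (WW b t eta (upd (sfrac R (val y)) i.+1 N%:R^-1) - WW b t eta (sfrac R (val y))).
Proof.
move=> hN.
have n0 : 0 < N%:R :> R by rewrite ltr0n.
set x := val y; set s := sfrac R x.
set U := lam * N%:R * (s i ^+ 2 - s i.+1 ^+ 2).
case: (eqVneq U 0) => hU.
  by rewrite hU mul0r; apply: sum_if0.
have hs : s i != s i.+1.
  by apply: contra_neq hU => e; rewrite /U e subrr mulr0.
have hx : state_ok x := valP y.
set top := if (i : nat) == 0%N then N else xn x i.-1.
have hsi : s i = top%:R / N%:R.
  rewrite /s /top; case E: (nat_of_ord i) => [|i'] /=.
    by rewrite sfrac_0 divff // gt_eqF.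
  by rewrite sfrac_S.
have hsi1 : s i.+1 = (xn x i)%:R / N%:R by rewrite /s sfrac_S.
have htop : (xn x i < top)%N.
  have le : (xn x i <= top)%N.
    rewrite /top; case: ifP => _; first exact: xn_leN.
    by apply: xn_mono => //; exact: leq_pred.
  rewrite ltn_neqAle le andbT; apply: contra_neq hs => e.
  by rewrite hsi hsi1 e.
have htN : (top <= N)%N by rewrite /top; case: ifP => _ //; exact: xn_leN.
have hxi : xn x i = x i by apply: xn_ord.
pose f := [ffun j : 'I_b => (inord (x j + (j == i)) : 'I_N.+1)].
have fv : forall j, (f j : nat) = (x j + (j == i))%N.
  move=> j; rewrite ffunE inordK //.
  case: (eqVneq j i) => [->|hji].
    have h := leq_trans htop htN; rewrite hxi in h; simpl; lia.
  have := ltn_ord (x j); simpl; lia.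
have fok : state_ok f.
  apply/forallP => a; apply/forallP => c; apply/implyP => hac; rewrite !fv.
  have hxac : (x c <= x a)%N.
    by have /forallP /(_ c) /implyP := (forallP hx) a; apply.
  case: (eqVneq c i) => hci; case: (eqVneq a i) => hai.
  - by rewrite hci hai.
  - have hai' : (a < i)%N by rewrite ltn_neqAle hai /= -hci.
    have i0 : (i : nat) != 0%N by rewrite -lt0n (leq_ltn_trans (leq0n a) hai').
    move: htop; rewrite /top (negbTE i0) => htop.
    have hm : (xn x i.-1 <= xn x a)%N by apply: xn_mono => //; rewrite -ltnS prednK // lt0n.
    have h := leq_trans htop hm; rewrite hxi (xn_ord x a) in h.
    rewrite hci; simpl; lia.
  - rewrite hai in hxac *; simpl; lia.
  - simpl; lia.
pose z0 : state N b := exist _ f fok.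
rewrite (sum_if1 _ _ _ _ z0).
- congr (_ * (_ - _)); apply: WW_ext => k hk.
  rewrite /= sfrac_S /upd /s sfrac_S.
  have e1 := xn_ord f (Ordinal hk); have e2 := xn_ord x (Ordinal hk); simpl in e1, e2.
  rewrite e1 e2 fv /= eqSS.
  case: (eqVneq (Ordinal hk) i) => [<-|hki] /=.
    by rewrite eqxx addn1 -natr1 mulrDl mul1r.
  have -> : (k == i) = false.
    by apply/negbTE; apply: contra_neq hki => e; apply: val_inj.
  by rewrite addn0.
- by apply/forallP => j; rewrite /= fv.
- apply/eqP => e; have := congr1 (fun w : state N b => (val w i : nat)) e.
  rewrite /= fv eqxx; change ((x i + true)%N = x i -> False); lia.
- move=> z /forallP hz; apply: val_inj; apply/ffunP => j; apply: val_inj.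
  change ((val z j : nat) = (f j : nat)); rewrite fv; apply/eqP; exact: (hz j).
Qed.


Lemma dn_sum eta t (y : state N b) (i : 'I_b) : (0 < N)%N ->
  \sum_(z | z != y) (if [forall j : 'I_b, ((val z j : nat) + (j == i))%N == val y j]
        then N%:R * (sfrac R (val y) i.+1 - sfrac R (val y) i.+2) else 0) *
     (WW b t eta (sfrac R (val z)) - WW b t eta (sfrac R (val y)))
  = N%:R * (sfrac R (val y) i.+1 - sfrac R (val y) i.+2) *
     (WW b t eta (upd (sfrac R (val y)) i.+1 (- N%:R^-1)) - WW b t eta (sfrac R (val y))).
Proof.
move=> hN.
have n0 : 0 < N%:R :> R by rewrite ltr0n.
set x := val y; set s := sfrac R x.
set U := N%:R * (s i.+1 - s i.+2).
case: (eqVneq U 0) => hU.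
  by rewrite hU mul0r; apply: sum_if0.
have hs : s i.+1 != s i.+2.
  by apply: contra_neq hU => e; rewrite /U e subrr mulr0.
have hx : state_ok x := valP y.
have hxi : xn x i = x i by apply: xn_ord.
have hlt : (xn x i.+1 < xn x i)%N.
  have le : (xn x i.+1 <= xn x i)%N by apply: xn_mono.
  rewrite ltn_neqAle le andbT; apply: contra_neq hs => e.
  by rewrite /s !sfrac_S e.
pose f := [ffun j : 'I_b => (inord (x j - (j == i)) : 'I_N.+1)].
have fv : forall j, (f j : nat) = (x j - (j == i))%N.
  move=> j; rewrite ffunE inordK //.
  have := ltn_ord (x j); lia.
have fok : state_ok f.
  apply/forallP => a; apply/forallP => c; apply/implyP => hac; rewrite !fv.
  have hxac : (x c <= x a)%N.
    by have /forallP /(_ c) /implyP := (forallP hx) a; apply.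
  case: (eqVneq c i) => hci; case: (eqVneq a i) => hai.
  - by rewrite hci hai.
  - rewrite hci in hac; have : (a <= i)%N := hac. simpl; lia.
  - have hic : (i < c)%N by rewrite ltn_neqAle eq_sym hci /= -hai.
    have hm : (xn x c <= xn x i.+1)%N by apply: xn_mono.
    rewrite (xn_ord x c) in hm; rewrite hai; simpl; lia.
  - simpl; lia.
pose z0 : state N b := exist _ f fok.
rewrite (sum_if1 _ _ _ _ z0).
- congr (_ * (_ - _)); apply: WW_ext => k hk.
  rewrite /= sfrac_S /upd /s sfrac_S.
  have e1 := xn_ord f (Ordinal hk); have e2 := xn_ord x (Ordinal hk); simpl in e1, e2.
  rewrite e1 e2 fv /= eqSS.
  case: (eqVneq (Ordinal hk) i) => [hki|hki].
    have ek : k = i by rewrite -hki.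
    rewrite hki ek eqxx.
    have hp : (1 <= x i)%N by have := hlt; rewrite hxi; lia.
    by rewrite natrB // mulrBl mul1r.
  have -> : (k == i) = false.
    by apply/negbTE; apply: contra_neq hki => e; apply: val_inj.
  by rewrite subn0.
- apply/forallP => j; rewrite /= fv; apply/eqP.
  case: (eqVneq j i) => [->|hji]; last by simpl; lia.
  have := hlt; rewrite hxi; simpl; lia.
- apply/eqP => e; have := congr1 (fun w : state N b => (val w i : nat)) e.
  rewrite /= fv eqxx; change ((x i - true)%N = x i -> False).
  have := hlt; rewrite hxi; lia.
- move=> z /forallP hz; apply: val_inj; apply/ffunP => j; apply: val_inj.
  change ((val z j : nat) = (f j : nat)); rewrite fv; move: (eqP (hz j)).
case: (j == i) => /=; lia.
Qed.


Lemma GV_Gen lam eta t (y : state N b) : (0 < N)%N ->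
  GV lam (fun z => WW b t eta (sfrac R (val z))) y = Gen b lam N%:R t eta (sfrac R (val y)).
Proof.
move=> hN; rewrite /GV /rate /Gen.
under eq_bigr do rewrite mulr_suml.
rewrite exchange_big /=; apply: eq_bigr => i _.
under eq_bigr do rewrite mulrDl.
rewrite big_split /= up_sum // dn_sum //.
Qed.

End MC.
Arguments GV {R N b}.


Lemma sumsq_le (R : realType) (B : nat) (F : nat -> R) :
  \sum_(i < B) F i ^+ 2 <= (\sum_(i < B) `|F i|) ^+ 2.
Proof.
elim: B => [|B IH]; first by rewrite !big_ord0 expr0n /= lexx.
rewrite !big_ord_recr /=.
have S0 : 0 <= \sum_(i < B) `|F i| by rewrite sumr_ge0.
have := real_normK (num_real (F B)); have := normr_ge0 (F B).
set S := \sum_(i < B) `|F i| in IH S0 *; set a := `|F B|; nra.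
Qed.

Theorem lemma1 (R : realType) (gamma alpha xi : R) (b : nat -> nat) :
  0 < gamma <= 1 -> 0 < alpha < 1 / 4 -> 0 < xi ->
  (forall N, (1 <= b N)%N) ->
  (exists C : R, exists N1 : nat, forall N : nat, (N1 <= N)%N ->
      (b N)%:R <= C * ln (N%:R : R)) ->
  exists N0 : nat, forall N : nat, (N0 <= N)%N ->
    forall pi : state N (b N) -> R,
      is_stationary (lambdaN gamma alpha N) pi ->
    forall sstar : 'I_(b N) -> R,
      is_fixed_point (lambdaN gamma alpha N) sstar ->
      \sum_(x : state N (b N))
         pi x * (\sum_(i < b N) (sfrac R (val x) i.+1 - sstar i) ^+ 2)
      <= 1 / (N%:R `^ (1 - 4 * alpha - 7 * xi)).
Proof.
move=> /andP[g0 g1] /andP[a0 a1] x0 hb1 [C [N1 hC]].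
have [N0 [hN0 hN]] := asympt R gamma alpha xi C b N1 g0 (ltW a0) x0 hC.
exists N0 => N hNN pi hpi sstar hfix.
have hNpos : (0 < N)%N by apply: leq_trans hNN.
set n := N%:R : R.
have n1 : 1 <= n by rewrite /n ler1n.
have n0 : 0 < n by apply: lt_le_trans n1.
set lam := lambdaN gamma alpha N.
have hna : 1 <= n `^ alpha by apply: powR_ge1' => //; exact: ltW.
have ga : 0 < gamma / n `^ alpha by rewrite divr_gt0 // (lt_le_trans ltr01 hna).
have ga1 : gamma / n `^ alpha <= 1.
  by rewrite ler_pdivrMr ?(lt_le_trans ltr01 hna) // mul1r (le_trans g1 hna).
have elam : 1 - lam = gamma / n `^ alpha by rewrite /lam /lambdaN; ring.
have l0 : 0 <= lam by move: ga1; rewrite -elam; lra.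
have l1 : lam < 1 by move: ga; rewrite -elam; lra.
set eta := (Num.sqrt n)^-1.
have sq0 : 0 < Num.sqrt n by rewrite sqrtr_gt0.
have e0 : 0 < eta by rewrite invr_gt0.
have hen : eta ^+ 2 * n = 1.
  by rewrite /eta exprVn sqr_sqrtr ?mulVf // ?gt_eqF // ltW.
set B := b N.
have hB : (1 <= B)%N := hb1 N.
set t := sext sstar.
case: hfix => tmon tfp0.
have tfp : forall i, (i < B)%N -> lam * (t i ^+ 2 - t i.+1 ^+ 2) - (t i.+1 - t i.+2) = 0.
  by move=> i hi; have := tfp0 (Ordinal hi); rewrite /fdrift /=.
have tbig : forall k, (B < k)%N -> t k = 0 by move=> k hk; apply: sext_big.
have [tb tq] := fp_facts R B lam t (ltac:(by rewrite l0 ltW)) erefl tbig tmon tfp.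
set K := 26 * B%:R ^+ 10 / ((1 - lam) * n).
pose V := fun z : state N B => WW B t eta (sfrac R (val z)).
have hG : forall y : state N B, GV lam V y <= - (1 - lam) * L1 B (sfrac R (val y)) t ^+ 2 + K.
  move=> y; rewrite /V GV_Gen //.
  have [s0 sb sm sbb] := sfrac_facts R N B (val y) hNpos (valP y).
  by apply: Gen_bound => //; apply: tbig.
have hbal := balance_zero R N B lam pi V hpi.
set S := \sum_(x : state N B) pi x * L1 B (sfrac R (val x)) t ^+ 2.
case: hpi => hpi0 [hpi1 _].
have hSK : (1 - lam) * S <= K.
  have : 0 <= \sum_(y : state N B) pi y * (- (1 - lam) * L1 B (sfrac R (val y)) t ^+ 2 + K).
    have h : \sum_(y : state N B) pi y * GV lam V y <=
      \sum_(y : state N B) pi y * (- (1 - lam) * L1 B (sfrac R (val y)) t ^+ 2 + K).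
      apply: ler_sum => y _; apply: ler_wpM2l; [exact: hpi0 | exact: hG].
    by rewrite hbal in h.
  have -> : \sum_(y : state N B) pi y * (- (1 - lam) * L1 B (sfrac R (val y)) t ^+ 2 + K)
     = - (1 - lam) * S + K * \sum_y pi y.
    rewrite /S mulr_sumr mulr_sumr -big_split /=; apply: eq_bigr => y _; ring.
  rewrite hpi1 mulr1; lra.
have hS : S <= K / (1 - lam).
  by rewrite ler_pdivlMr ?subr_gt0 // mulrC.
apply: (le_trans (y := S)); last first.
  apply: le_trans hS _; move: (hN N hNN); rewrite /K elam -/n -/B //.
rewrite /S; apply: ler_sum => x _; apply: ler_wpM2l; first exact: hpi0.
rewrite /L1.
have e : \sum_(i < B) (sfrac R (val x) i.+1 - sstar i) ^+ 2 =
   \sum_(i < B) (sfrac R (val x) i.+1 - t i.+1) ^+ 2.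
  by apply: eq_bigr => i _; rewrite /t sext_ord.
rewrite e; exact: (sumsq_le R B (fun k => sfrac R (val x) k.+1 - t k.+1)).
Qed.
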